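(* Let $k\ge 1$, let $\alpha=\alpha(t,x,x_1)$, $\beta=\beta(t,x,x_1)$, $\gamma^{(1)}=\gamma^{(1)}(t,x,x_1)$ be smooth with $\beta-\alpha x_1\neq 0$, and let $\tau^{(k)}=\alpha\partial_t+\beta\partial_x+\sum_{i=1}^k\gamma^{(i)}\partial_{x_i}$ be the telescopic vector field with $\gamma^{(i)}$, $2\le i\le k$, defined by $$\gamma^{(i)}=D_t(\gamma^{(i-1)})-D_t(\alpha)x_i+\frac{\gamma^{(1)}+x_1D_t\alpha-D_t\beta}{\beta-x_1\alpha}\big(\gamma^{(i-1)}-\alpha x_i\big).$$ Then, as derivations acting on functions of $(t,x,x_1,\ldots,x_{k-1})$, $$[\tau^{(k)},D_t]=\lambda\,\tau^{(k)}+\mu\,D_t,\qquad \lambda=\frac{\gamma^{(1)}+x_1D_t\alpha-D_t\beta}{\beta-x_1\alpha},\quad \mu=-(D_t+\lambda)(\alpha).$$ Consequently, the coefficients of $\tau^{(k)}$ satisfy the $\lambda$-prolongation recurrence for this $\lambda$ (which depends on $(t,x,x_1,x_2)$), i.e. formally $\tau^{(k)}=(\alpha\partial_t+\beta\partial_x)^{[\lambda,(k)]}$.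
   Context: Jet coordinates $(t,x,x_1,x_2,\ldots)$, $x_i=d^ix/dt^i$; $D_t=\partial_t+x_1\partial_x+x_2\partial_{x_1}+\cdots$ the total derivative. For functions $\rho,\phi^0,\lambda$ possibly depending on finitely many jet variables, the formal $\lambda$-prolongation $(\rho\partial_t+\phi^0\partial_x)^{[\lambda,(k)]}=\rho\partial_t+\phi^0\partial_x+\sum_{i=1}^k\phi^{[\lambda,(i)]}\partial_{x_i}$ is defined by $\phi^{[\lambda,(0)]}=\phi^0$ and $\phi^{[\lambda,(i)]}=D_t(\phi^{[\lambda,(i-1)]})-D_t(\rho)x_i+\lambda(\phi^{[\lambda,(i-1)]}-\rho x_i)$. *)

(* Defs.v *)
From Stdlib Require Import Reals Lra ClassicalEpsilon.
Open Scope R_scope.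

(* A point of the jet space is (t, s) with s 0 = x and s i = x_i = d^i x/dt^i.
   A (jet) function is a real function of such points. *)
Definition JFun := R -> (nat -> R) -> R.

Definition upd (s : nat -> R) (i : nat) (u : R) : nat -> R :=
  fun j => if Nat.eqb j i then u else s j.

Definition depends_upto (N : nat) (f : JFun) : Prop :=
  forall t s s', (forall i, (i <= N)%nat -> s i = s' i) -> f t s = f t s'.

(* partial derivatives d/dt and d/dx_i (chosen classically; meaningful where they exist) *)
Definition pt (f : JFun) : JFun := fun t s =>
  epsilon (inhabits 0) (fun l => derivable_pt_lim (fun u => f u s) t l).
Definition px (i : nat) (f : JFun) : JFun := fun t s =>
  epsilon (inhabits 0) (fun l => derivable_pt_lim (fun u => f t (upd s i u)) (s i) l).

(* total derivative D_t = d_t + x_1 d_x + x_2 d_{x_1} + ... (formal series, as a limit of partial sums) *)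
Definition Dt (f : JFun) : JFun := fun t s =>
  pt f t s + epsilon (inhabits 0)
    (fun l => Un_cv (fun n => sum_f_R0 (fun i => s (S i) * px i f t s) n) l).

(* continuity on jet space (product topology) *)
Definition jcont (f : JFun) : Prop :=
  forall t s eps, 0 < eps -> exists N delta, 0 < delta /\
    forall t' s', Rabs (t' - t) < delta ->
      (forall i, (i <= N)%nat -> Rabs (s' i - s i) < delta) ->
      Rabs (f t' s' - f t s) < eps.

Fixpoint Ck (n : nat) (f : JFun) : Prop :=
  jcont f /\
  match n with
  | O => True
  | S m =>
      (forall t s, exists l, derivable_pt_lim (fun u => f u s) t l) /\
      (forall i t s, exists l, derivable_pt_lim (fun u => f t (upd s i u)) (s i) l) /\
      Ck m (pt f) /\ (forall i, Ck m (px i f))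
  end.

Definition smooth (f : JFun) : Prop :=
  (exists N, depends_upto N f) /\ forall n, Ck n f.

Definition lam (al be ga1 : JFun) : JFun := fun t s =>
  (ga1 t s + s 1%nat * Dt al t s - Dt be t s) / (be t s - s 1%nat * al t s).

Definition mu (al be ga1 : JFun) : JFun := fun t s =>
  - (Dt al t s + lam al be ga1 t s * al t s).

(* telescopic coefficients gamma^(i): gamma^(1) given, gamma^(i) for i >= 2 by recursion.
   (index 0 is set to beta, unused by tau) *)
Fixpoint tgam (al be ga1 : JFun) (i : nat) : JFun :=
  match i with
  | O => be
  | S j =>
      match j with
      | O => ga1
      | S _ => fun t s =>
          Dt (tgam al be ga1 j) t s - Dt al t s * s i
          + lam al be ga1 t s * (tgam al be ga1 j t s - al t s * s i)
      end
  end.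

Definition tau (k : nat) (al be ga1 : JFun) (f : JFun) : JFun := fun t s =>
  al t s * pt f t s + be t s * px 0 f t s
  + sum_f_R0 (fun j => tgam al be ga1 (S j) t s * px (S j) f t s) (k - 1).

(* lambda-prolongation coefficients phi^[lambda,(i)] of rho d_t + phi0 d_x *)
Fixpoint prolong (l rho phi0 : JFun) (i : nat) : JFun :=
  match i with
  | O => phi0
  | S j => fun t s =>
      Dt (prolong l rho phi0 j) t s - Dt rho t s * s i
      + l t s * (prolong l rho phi0 j t s - rho t s * s i)
  end.

(* Main.v *)
Require Import Defs.
From Stdlib Require Import Reals Lra Lia FunctionalExtensionality ClassicalEpsilon.
From Coquelicot Require Import Coquelicot.
Open Scope R_scope.

Definition DT (f : JFun) := forall t s, exists l, derivable_pt_lim (fun u => f u s) t l.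
Definition DX (f : JFun) := forall i t s, exists l, derivable_pt_lim (fun u => f t (upd s i u)) (s i) l.

Lemma pt_eq f t s l : derivable_pt_lim (fun u => f u s) t l -> pt f t s = l.
Proof.
  intro H. unfold pt.
  pose proof (epsilon_spec (inhabits 0) (fun l => derivable_pt_lim (fun u => f u s) t l) (ex_intro _ l H)) as H2.
  exact (uniqueness_limite _ _ _ _ H2 H).
Qed.

Lemma px_eq i f t s l : derivable_pt_lim (fun u => f t (upd s i u)) (s i) l -> px i f t s = l.
Proof.
  intro H. unfold px.
  pose proof (epsilon_spec (inhabits 0) (fun l => derivable_pt_lim (fun u => f t (upd s i u)) (s i) l) (ex_intro _ l H)) as H2.
  exact (uniqueness_limite _ _ _ _ H2 H).
Qed.

Lemma pt_lim f t s : DT f -> derivable_pt_lim (fun u => f u s) t (pt f t s).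
Proof. intro H. destruct (H t s) as [l Hl]. rewrite (pt_eq _ _ _ _ Hl). exact Hl. Qed.

Lemma px_lim i f t s : DX f -> derivable_pt_lim (fun u => f t (upd s i u)) (s i) (px i f t s).
Proof. intro H. destruct (H i t s) as [l Hl]. rewrite (px_eq _ _ _ _ _ Hl). exact Hl. Qed.

Lemma upd_same s i u : upd s i u i = u.
Proof. unfold upd. rewrite Nat.eqb_refl. reflexivity. Qed.
Lemma upd_other s i u j : j <> i -> upd s i u j = s j.
Proof. intro H. unfold upd. destruct (Nat.eqb_spec j i); [contradiction|reflexivity]. Qed.
Lemma upd_upd s i v w : upd (upd s i v) i w = upd s i w.
Proof. apply functional_extensionality; intro m. unfold upd. destruct (Nat.eqb m i); reflexivity. Qed.
Lemma upd_id s i : upd s i (s i) = s.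
Proof. apply functional_extensionality; intro m. unfold upd. destruct (Nat.eqb_spec m i); subst; reflexivity. Qed.
Lemma upd_comm s i j u v : i <> j -> upd (upd s i u) j v = upd (upd s j v) i u.
Proof. intro H. apply functional_extensionality; intro m. unfold upd.
  destruct (Nat.eqb_spec m j); destruct (Nat.eqb_spec m i); subst; try lia; reflexivity. Qed.

Lemma px_lim_gen i f t p (q : R -> nat -> R) z0 :
  DX f -> (forall z, upd p i z = q z) -> p i = z0 ->
  derivable_pt_lim (fun z => f t (q z)) z0 (px i f t p).
Proof.
  intros H Hq Hz. assert (E : (fun z => f t (q z)) = (fun z => f t (upd p i z))).
  { apply functional_extensionality; intro z; rewrite Hq; reflexivity. }
  rewrite E, <- Hz. apply px_lim; auto.
Qed.

Lemma px_zero i f t s : (forall u, f t (upd s i u) = f t s) -> px i f t s = 0.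
Proof.
  intro H. apply px_eq.
  assert (E : (fun u => f t (upd s i u)) = fct_cte (f t s)).
  { apply functional_extensionality; intro u; rewrite H; reflexivity. }
  rewrite E. apply derivable_pt_lim_const.
Qed.

Lemma px_dep_zero N f i t s : depends_upto N f -> (N < i)%nat -> px i f t s = 0.
Proof.
  intros H Hi. apply px_zero. intro u. apply H. intros m Hm. apply upd_other. lia.
Qed.

Definition fc (c : R) : JFun := fun _ _ => c.
Definition fpr (i : nat) : JFun := fun _ s => s i.
Definition fadd (f g : JFun) : JFun := fun t s => f t s + g t s.
Definition fmul (f g : JFun) : JFun := fun t s => f t s * g t s.
Definition finv (f : JFun) : JFun := fun t s => / f t s.
Definition fsum (F : nat -> JFun) (N : nat) : JFun := fun t s => sum_f_R0 (fun i => F i t s) N.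
Definition nz (f : JFun) := forall t s, f t s <> 0.

Ltac fext := let t := fresh "t" in let s := fresh "s" in
  apply functional_extensionality; intro t; apply functional_extensionality; intro s.

Lemma pt_c c : pt (fc c) = fc 0.
Proof. fext. apply pt_eq. apply derivable_pt_lim_const. Qed.
Lemma px_c i c : px i (fc c) = fc 0.
Proof. fext. apply px_eq. apply derivable_pt_lim_const. Qed.
Lemma pt_pr i : pt (fpr i) = fc 0.
Proof. fext. apply pt_eq. apply derivable_pt_lim_const. Qed.
Lemma px_pr i j : px j (fpr i) = fc (if Nat.eqb i j then 1 else 0).
Proof. fext. apply px_eq. unfold fpr, fc. destruct (Nat.eqb_spec i j).
  - subst. assert (E : (fun u => upd s j u j) = id).
    { apply functional_extensionality; intro u; apply upd_same. }
    rewrite E. apply derivable_pt_lim_id.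
  - assert (E : (fun u => upd s j u i) = fct_cte (s i)).
    { apply functional_extensionality; intro u; apply upd_other; auto. }
    rewrite E. apply derivable_pt_lim_const.
Qed.

Lemma pt_add f g : DT f -> DT g -> pt (fadd f g) = fadd (pt f) (pt g).
Proof. intros Hf Hg. fext. apply pt_eq. unfold fadd.
  apply (derivable_pt_lim_plus (fun u => f u s) (fun u => g u s)); apply pt_lim; auto. Qed.
Lemma pt_mul f g : DT f -> DT g -> pt (fmul f g) = fadd (fmul (pt f) g) (fmul f (pt g)).
Proof. intros Hf Hg. fext. apply pt_eq. unfold fadd, fmul.
  pose proof (derivable_pt_lim_mult (fun u => f u s) (fun u => g u s) t _ _ (pt_lim f t s Hf) (pt_lim g t s Hg)) as H.
  unfold mult_fct in H. replace (pt f t s * g t s + f t s * pt g t s) with (pt f t s * g t s + f t s * pt g t s) by ring.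
  exact H. Qed.
Lemma px_add i f g : DX f -> DX g -> px i (fadd f g) = fadd (px i f) (px i g).
Proof. intros Hf Hg. fext. apply px_eq. unfold fadd.
  apply (derivable_pt_lim_plus (fun u => f t (upd s i u)) (fun u => g t (upd s i u))); apply px_lim; auto. Qed.
Lemma px_mul i f g : DX f -> DX g -> px i (fmul f g) = fadd (fmul (px i f) g) (fmul f (px i g)).
Proof. intros Hf Hg. fext. apply px_eq. unfold fadd, fmul.
  pose proof (derivable_pt_lim_mult (fun u => f t (upd s i u)) (fun u => g t (upd s i u)) (s i) _ _ (px_lim i f t s Hf) (px_lim i g t s Hg)) as H.
  unfold mult_fct in H. rewrite upd_id in H. exact H. Qed.

Lemma dinv (h : R -> R) x l : h x <> 0 -> derivable_pt_lim h x l ->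
  derivable_pt_lim (fun u => / h u) x (-1 * (l * (/ h x * / h x))).
Proof.
  intros Hn H.
  pose proof (derivable_pt_lim_div (fct_cte 1) h x 0 l (derivable_pt_lim_const 1 x) H Hn) as H2.
  assert (E : (fct_cte 1 / h)%F = (fun u => / h u)).
  { apply functional_extensionality; intro u. unfold div_fct, fct_cte. unfold Rdiv. ring. }
  rewrite E in H2. replace (-1 * (l * (/ h x * / h x))) with ((0 * h x - l * fct_cte 1 x) / (h x)²).
  exact H2. unfold fct_cte, Rsqr. field. auto.
Qed.

Lemma pt_inv f : nz f -> DT f -> pt (finv f) = fmul (fc (-1)) (fmul (pt f) (fmul (finv f) (finv f))).
Proof. intros Hn Hf. fext. apply pt_eq. unfold fmul, finv, fc.
  apply (dinv (fun u => f u s)); [apply Hn | apply pt_lim; auto]. Qed.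
Lemma px_inv i f : nz f -> DX f -> px i (finv f) = fmul (fc (-1)) (fmul (px i f) (fmul (finv f) (finv f))).
Proof. intros Hn Hf. fext. apply px_eq. unfold fmul, finv, fc.
  pose proof (dinv (fun u => f t (upd s i u)) (s i) _ (Hn _ _) (px_lim i f t s Hf)) as H.
  cbv beta in H. rewrite upd_id in H. exact H. Qed.

Lemma DT_c c : DT (fc c). Proof. intros t s. exists 0. apply derivable_pt_lim_const. Qed.
Lemma DX_c c : DX (fc c). Proof. intros i t s. exists 0. apply derivable_pt_lim_const. Qed.
Lemma DT_pr i : DT (fpr i). Proof. intros t s. exists 0. apply derivable_pt_lim_const. Qed.
Lemma DX_pr j : DX (fpr j). Proof. intros i t s. exists (px i (fpr j) t s). apply px_lim_gen with (p := s); auto.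
  - intros i' t' s'. unfold fpr. destruct (Nat.eqb_spec j i').
    + subst. exists 1. assert (E : (fun u => upd s' i' u i') = id).
      { apply functional_extensionality; intro u; apply upd_same. }
      rewrite E. apply derivable_pt_lim_id.
    + exists 0. assert (E : (fun u => upd s' i' u j) = fct_cte (s' j)).
      { apply functional_extensionality; intro u; apply upd_other; auto. }
      rewrite E. apply derivable_pt_lim_const.
Qed.
Lemma DT_add f g : DT f -> DT g -> DT (fadd f g).
Proof. intros Hf Hg t s. eexists. apply (derivable_pt_lim_plus (fun u => f u s) (fun u => g u s)); apply pt_lim; auto. Qed.
Lemma DX_add f g : DX f -> DX g -> DX (fadd f g).
Proof. intros Hf Hg i t s. eexists. apply (derivable_pt_lim_plus (fun u => f t (upd s i u)) (fun u => g t (upd s i u))); apply px_lim; auto. Qed.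
Lemma DT_mul f g : DT f -> DT g -> DT (fmul f g).
Proof. intros Hf Hg t s. eexists. apply (derivable_pt_lim_mult (fun u => f u s) (fun u => g u s)); apply pt_lim; auto. Qed.
Lemma DX_mul f g : DX f -> DX g -> DX (fmul f g).
Proof. intros Hf Hg i t s. eexists. apply (derivable_pt_lim_mult (fun u => f t (upd s i u)) (fun u => g t (upd s i u))); apply px_lim; auto. Qed.
Lemma DT_inv f : nz f -> DT f -> DT (finv f).
Proof. intros Hn Hf t s. eexists. apply (dinv (fun u => f u s)); [apply Hn| apply pt_lim; auto]. Qed.
Lemma DX_inv f : nz f -> DX f -> DX (finv f).
Proof. intros Hn Hf i t s. eexists. apply (dinv (fun u => f t (upd s i u))); [apply Hn| apply px_lim; auto]. Qed.

Lemma jcont_2d (h : R -> R -> R) f g : jcont f -> jcont g ->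
  (forall t s, continuity_2d_pt h (f t s) (g t s)) -> jcont (fun t s => h (f t s) (g t s)).
Proof.
  intros Hf Hg Hh t s eps Heps.
  destruct (Hh t s (mkposreal eps Heps)) as [d Hd].
  destruct (Hf t s d (cond_pos d)) as [N1 [d1 [Hd1 H1]]].
  destruct (Hg t s d (cond_pos d)) as [N2 [d2 [Hd2 H2]]].
  exists (max N1 N2), (Rmin d1 d2). split. apply Rmin_pos; auto.
  intros t' s' Ht Hs. apply (Hd (f t' s') (g t' s')).
  - apply H1. apply Rlt_le_trans with (1 := Ht); apply Rmin_l.
    intros i Hi. apply Rlt_le_trans with (1 := Hs i ltac:(lia)); apply Rmin_l.
  - apply H2. apply Rlt_le_trans with (1 := Ht); apply Rmin_r.
    intros i Hi. apply Rlt_le_trans with (1 := Hs i ltac:(lia)); apply Rmin_r.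
Qed.

Lemma jcont_c c : jcont (fc c).
Proof. intros t s eps He. exists 0%nat, 1. split. lra. intros. unfold fc. rewrite Rminus_eq_0, Rabs_R0. auto. Qed.
Lemma jcont_pr i : jcont (fpr i).
Proof. intros t s eps He. exists i, eps. split. auto. intros t1 s1 H1 H2. unfold fpr. apply H2. lia. Qed.
Lemma jcont_add f g : jcont f -> jcont g -> jcont (fadd f g).
Proof. intros. apply (jcont_2d (fun a b => a + b)); auto. intros.
  apply continuity_2d_pt_plus; [apply continuity_2d_pt_id1|apply continuity_2d_pt_id2]. Qed.
Lemma jcont_mul f g : jcont f -> jcont g -> jcont (fmul f g).
Proof. intros. apply (jcont_2d (fun a b => a * b)); auto. intros.
  apply continuity_2d_pt_mult; [apply continuity_2d_pt_id1|apply continuity_2d_pt_id2]. Qed.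
Lemma jcont_inv f : nz f -> jcont f -> jcont (finv f).
Proof. intros Hn H. apply (jcont_2d (fun a b => / a) f f); auto. intros.
  apply continuity_2d_pt_inv; [apply continuity_2d_pt_id1| apply Hn]. Qed.

Lemma Ck_mono n f : Ck (S n) f -> Ck n f.
Proof.
  revert f. induction n; intros f H.
  - simpl in *. tauto.
  - destruct H as [H0 [H1 [H2 [H3 H4]]]]. simpl.
    refine (conj H0 (conj H1 (conj H2 (conj _ _)))). apply IHn; auto. intro i; apply IHn; auto.
Qed.
Lemma Ck_jcont n f : Ck n f -> jcont f. Proof. destruct n; simpl; tauto. Qed.
Lemma Ck_DT n f : Ck (S n) f -> DT f. Proof. simpl. unfold DT. tauto. Qed.
Lemma Ck_DX n f : Ck (S n) f -> DX f. Proof. simpl. unfold DX. tauto. Qed.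
Lemma Ck_pt n f : Ck (S n) f -> Ck n (pt f). Proof. simpl. tauto. Qed.
Lemma Ck_px n i f : Ck (S n) f -> Ck n (px i f). Proof. simpl. intros [_ [_ [_ [_ H]]]]. auto. Qed.

Lemma Ck_c n c : Ck n (fc c).
Proof. revert c. induction n; intro c; simpl; split; try apply jcont_c; auto.
  split. apply DT_c. split. apply DX_c. rewrite pt_c. split. auto. intro i. rewrite px_c. auto. Qed.
Lemma Ck_pr n j : Ck n (fpr j).
Proof. destruct n; simpl; split; try apply jcont_pr; auto.
  split. apply DT_pr. split. apply DX_pr. rewrite pt_pr. split. apply Ck_c. intro i. rewrite px_pr. apply Ck_c. Qed.
Lemma Ck_add n f g : Ck n f -> Ck n g -> Ck n (fadd f g).
Proof. revert f g. induction n; intros f g Hf Hg.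
  - simpl in *. split; [apply jcont_add; tauto | auto].
  - pose proof (Ck_DT _ _ Hf). pose proof (Ck_DT _ _ Hg). pose proof (Ck_DX _ _ Hf). pose proof (Ck_DX _ _ Hg).
    simpl. split. apply jcont_add; eapply Ck_jcont; eauto.
    split. apply DT_add; auto. split. apply DX_add; auto.
    split. rewrite pt_add; auto. apply IHn; apply Ck_pt; auto.
    intro i. rewrite px_add; auto. apply IHn; apply Ck_px; auto.
Qed.
Lemma Ck_mul n f g : Ck n f -> Ck n g -> Ck n (fmul f g).
Proof. revert f g. induction n; intros f g Hf Hg.
  - simpl in *. split; [apply jcont_mul; tauto | auto].
  - pose proof (Ck_DT _ _ Hf). pose proof (Ck_DT _ _ Hg). pose proof (Ck_DX _ _ Hf). pose proof (Ck_DX _ _ Hg).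
    simpl. split. apply jcont_mul; eapply Ck_jcont; eauto.
    split. apply DT_mul; auto. split. apply DX_mul; auto.
    split. rewrite pt_mul; auto. apply Ck_add; apply IHn; try apply Ck_pt; auto; apply Ck_mono; auto.
    intro i. rewrite px_mul; auto. apply Ck_add; apply IHn; try apply Ck_px; auto; apply Ck_mono; auto.
Qed.
Lemma Ck_inv n f : nz f -> Ck n f -> Ck n (finv f).
Proof. intro Hn. revert f Hn. induction n; intros f Hn Hf.
  - simpl in *. split; [apply jcont_inv; tauto | auto].
  - pose proof (Ck_DT _ _ Hf). pose proof (Ck_DX _ _ Hf).
    assert (Ci : Ck n (finv f)) by (apply IHn; auto; apply Ck_mono; auto).
    simpl. split. apply jcont_inv; auto; eapply Ck_jcont; eauto.
    split. apply DT_inv; auto. split. apply DX_inv; auto.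
    split. rewrite pt_inv; auto. apply Ck_mul. apply Ck_c. apply Ck_mul. apply Ck_pt; auto. apply Ck_mul; auto.
    intro i. rewrite px_inv; auto. apply Ck_mul. apply Ck_c. apply Ck_mul. apply Ck_px; auto. apply Ck_mul; auto.
Qed.

Definition Sm f := forall n, Ck n f.

Lemma fsum_S F N : fsum F (S N) = fadd (fsum F N) (F (S N)).
Proof. reflexivity. Qed.
Lemma fsum_0 F : fsum F 0 = F 0%nat.
Proof. reflexivity. Qed.

Lemma Ck_fsum n F N : (forall i, (i <= N)%nat -> Ck n (F i)) -> Ck n (fsum F N).
Proof. induction N; intro H. rewrite fsum_0. apply H; lia.
  rewrite fsum_S. apply Ck_add. apply IHN; intros; apply H; lia. apply H; lia. Qed.
Lemma DT_fsum F N : (forall i, (i <= N)%nat -> DT (F i)) -> DT (fsum F N).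
Proof. induction N; intro H. rewrite fsum_0. apply H; lia.
  rewrite fsum_S. apply DT_add. apply IHN; intros; apply H; lia. apply H; lia. Qed.
Lemma DX_fsum F N : (forall i, (i <= N)%nat -> DX (F i)) -> DX (fsum F N).
Proof. induction N; intro H. rewrite fsum_0. apply H; lia.
  rewrite fsum_S. apply DX_add. apply IHN; intros; apply H; lia. apply H; lia. Qed.
Lemma pt_fsum F N : (forall i, (i <= N)%nat -> DT (F i)) -> pt (fsum F N) = fsum (fun i => pt (F i)) N.
Proof. induction N; intro H. rewrite !fsum_0. reflexivity.
  rewrite !fsum_S. rewrite pt_add. rewrite IHN. reflexivity. intros; apply H; lia.
  apply DT_fsum; intros; apply H; lia. apply H; lia. Qed.
Lemma px_fsum j F N : (forall i, (i <= N)%nat -> DX (F i)) -> px j (fsum F N) = fsum (fun i => px j (F i)) N.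
Proof. induction N; intro H. rewrite !fsum_0. reflexivity.
  rewrite !fsum_S. rewrite px_add. rewrite IHN. reflexivity. intros; apply H; lia.
  apply DX_fsum; intros; apply H; lia. apply H; lia. Qed.

Lemma dep_mono N N' f : (N <= N')%nat -> depends_upto N f -> depends_upto N' f.
Proof. intros H Hf t s s' E. apply Hf. intros; apply E; lia. Qed.
Lemma dep_c N c : depends_upto N (fc c). Proof. intros t s s' E. reflexivity. Qed.
Lemma dep_pr N i : (i <= N)%nat -> depends_upto N (fpr i). Proof. intros H t s s' E. apply E; auto. Qed.
Lemma dep_add N f g : depends_upto N f -> depends_upto N g -> depends_upto N (fadd f g).
Proof. intros Hf Hg t s s' E. unfold fadd. rewrite (Hf t s s' E), (Hg t s s' E). reflexivity. Qed.
Lemma dep_mul N f g : depends_upto N f -> depends_upto N g -> depends_upto N (fmul f g).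
Proof. intros Hf Hg t s s' E. unfold fmul. rewrite (Hf t s s' E), (Hg t s s' E). reflexivity. Qed.
Lemma dep_inv N f : depends_upto N f -> depends_upto N (finv f).
Proof. intros Hf t s s' E. unfold finv. rewrite (Hf t s s' E). reflexivity. Qed.
Lemma dep_fsum N F M : (forall i, (i <= M)%nat -> depends_upto N (F i)) -> depends_upto N (fsum F M).
Proof. induction M; intro H. rewrite fsum_0. apply H; lia.
  rewrite fsum_S. apply dep_add. apply IHM; intros; apply H; lia. apply H; lia. Qed.
Lemma dep_pt N f : depends_upto N f -> depends_upto N (pt f).
Proof. intros Hf t s s' E. unfold pt.
  assert (F : (fun u => f u s) = (fun u => f u s')).
  { apply functional_extensionality; intro u. apply Hf; auto. }
  rewrite F. reflexivity. Qed.
Lemma dep_px N i f : depends_upto N f -> depends_upto N (px i f).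
Proof. intros Hf t s s' E. destruct (Nat.le_gt_cases i N).
  - unfold px. rewrite (E i H).
    assert (F : (fun u => f t (upd s i u)) = (fun u => f t (upd s' i u))).
    { apply functional_extensionality; intro u. apply Hf. intros m Hm. unfold upd.
      destruct (Nat.eqb m i); auto. }
    rewrite F. reflexivity.
  - rewrite (px_dep_zero N f i t s Hf H), (px_dep_zero N f i t s' Hf H). reflexivity.
Qed.

Lemma sum_stab (a : nat -> R) N n : (forall i, (N < i)%nat -> a i = 0) -> (N <= n)%nat ->
  sum_f_R0 a n = sum_f_R0 a N.
Proof. intros H. induction n; intro Hn.
  - assert (N = 0%nat) by lia. subst. reflexivity.
  - destruct (Nat.eq_dec N (S n)). subst. reflexivity.
    simpl. rewrite IHn by lia. rewrite (H (S n)) by lia. ring. Qed.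

Lemma Dt_form N g t s : depends_upto N g ->
  Dt g t s = pt g t s + sum_f_R0 (fun i => s (S i) * px i g t s) N.
Proof.
  intro Hg. unfold Dt. f_equal.
  set (u := fun n => sum_f_R0 (fun i => s (S i) * px i g t s) n).
  assert (Hc : Un_cv u (u N)).
  { intros eps He. exists N. intros n Hn. unfold u. rewrite (sum_stab _ N n).
    unfold Rdist. rewrite Rminus_diag, Rabs_R0. auto.
    intros i Hi. rewrite (px_dep_zero N g i t s Hg Hi). ring. lia. }
  pose proof (epsilon_spec (inhabits 0) (fun l => Un_cv u l) (ex_intro _ _ Hc)) as H2.
  exact (UL_sequence _ _ _ H2 Hc).
Qed.

Lemma Dt_fun N g : depends_upto N g -> Dt g = fadd (pt g) (fsum (fun i => fmul (fpr (S i)) (px i g)) N).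
Proof. intro H. fext. rewrite (Dt_form N g t s H). reflexivity. Qed.

Lemma Sm_Dt N g : depends_upto N g -> Sm g -> Sm (Dt g).
Proof. intros H Hg n. rewrite (Dt_fun N g H). apply Ck_add. apply Ck_pt; apply Hg.
  apply Ck_fsum. intros. apply Ck_mul. apply Ck_pr. apply Ck_px; apply Hg. Qed.
Lemma dep_Dt N g : depends_upto N g -> depends_upto (S N) (Dt g).
Proof. intros H. rewrite (Dt_fun N g H). apply dep_add. apply dep_pt. apply (dep_mono N); auto.
  apply dep_fsum. intros. apply dep_mul. apply dep_pr; lia. apply dep_px; apply (dep_mono N); auto. Qed.

Lemma schwarz_gen (F A B AB BA : R -> R -> R) x y :
 (forall u v, derivable_pt_lim (fun z => F z v) u (A u v)) ->
 (forall u v, derivable_pt_lim (fun z => F u z) v (B u v)) ->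
 (forall u v, derivable_pt_lim (fun z => B z v) u (AB u v)) ->
 (forall u v, derivable_pt_lim (fun z => A u z) v (BA u v)) ->
 continuity_2d_pt AB x y -> continuity_2d_pt BA x y -> AB x y = BA x y.
Proof.
  intros HA HB HAB HBA CAB CBA.
  assert (EB : forall u v, Derive (fun t => F u t) v = B u v).
  { intros. apply is_derive_unique. apply is_derive_Reals. apply HB. }
  assert (EA : forall u v, Derive (fun t => F t v) u = A u v).
  { intros. apply is_derive_unique. apply is_derive_Reals. apply HA. }
  assert (EAB : forall u v, Derive (fun z => Derive (fun t => F z t) v) u = AB u v).
  { intros. rewrite (Derive_ext _ (fun z => B z v)) by (intro; apply EB).
    apply is_derive_unique. apply is_derive_Reals. apply HAB. }
  assert (EBA : forall u v, Derive (fun z => Derive (fun t => F t z) u) v = BA u v).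
  { intros. rewrite (Derive_ext _ (fun z => A u z)) by (intro; apply EA).
    apply is_derive_unique. apply is_derive_Reals. apply HBA. }
  rewrite <- EAB, <- EBA. apply Schwarz.
  - exists (mkposreal 1 Rlt_0_1). intros u v _ _. split; [|split; [|split]].
    + exists (A u v). apply is_derive_Reals. apply HA.
    + exists (B u v). apply is_derive_Reals. apply HB.
    + exists (AB u v). apply (is_derive_ext (fun z => B z v)). intro; symmetry; apply EB. apply is_derive_Reals. apply HAB.
    + exists (BA u v). apply (is_derive_ext (fun z => A u z)). intro; symmetry; apply EA. apply is_derive_Reals. apply HBA.
  - apply continuity_2d_pt_ext with (f := AB). intros; symmetry; apply EAB. auto.
  - apply continuity_2d_pt_ext with (f := BA). intros; symmetry; apply EBA. auto.
Qed.

Lemma jcont_cont2 g (T : R -> R -> R) (Q : R -> R -> nat -> R) x y :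
 jcont g -> (forall d, 0 < d -> exists d', 0 < d' /\ forall u v, Rabs (u - x) < d' -> Rabs (v - y) < d' ->
   Rabs (T u v - T x y) < d /\ forall m, Rabs (Q u v m - Q x y m) < d) ->
 continuity_2d_pt (fun u v => g (T u v) (Q u v)) x y.
Proof.
  intros Hg H eps. destruct (Hg (T x y) (Q x y) eps (cond_pos eps)) as [N [d [Hd Hc]]].
  destruct (H d Hd) as [d' [Hd' H']]. exists (mkposreal d' Hd'). intros u v Hu Hv. simpl in *.
  destruct (H' u v Hu Hv) as [H1 H2]. apply Hc; auto.
Qed.

Lemma upd3 s i j u v z : i <> j -> upd (upd (upd s j u) i v) j z = upd (upd s j z) i v.
Proof. intro H. apply functional_extensionality; intro m. unfold upd.
  destruct (Nat.eqb_spec m j); destruct (Nat.eqb_spec m i); try lia; reflexivity. Qed.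
Lemma upd2j s i j u v : i <> j -> upd (upd s j u) i v j = u.
Proof. intro H. unfold upd. destruct (Nat.eqb_spec j i); try lia. rewrite Nat.eqb_refl. auto. Qed.

Lemma schwarz_t f i t s : Ck 2 f -> pt (px i f) t s = px i (pt f) t s.
Proof.
  intro Hf.
  assert (DTf : DT f) by (eapply Ck_DT; eauto).
  assert (Dpx : DT (px i f)) by (apply (Ck_DT 0); apply (Ck_px 1); auto).
  assert (Dpt : DX (pt f)) by (apply (Ck_DX 0); apply (Ck_pt 1); auto).
  pose proof (schwarz_gen (fun u v => f u (upd s i v)) (fun u v => pt f u (upd s i v))
    (fun u v => px i f u (upd s i v)) (fun u v => pt (px i f) u (upd s i v))
    (fun u v => px i (pt f) u (upd s i v)) t (s i)) as H.
  cbv beta in H. rewrite upd_id in H. apply H; clear H.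
  - intros u v. apply pt_lim; auto.
  - intros u v. apply px_lim_gen. eapply Ck_DX; eauto. intro z; apply upd_upd. apply upd_same.
  - intros u v. apply pt_lim; auto.
  - intros u v. apply px_lim_gen; auto. intro z; apply upd_upd. apply upd_same.
  - apply (jcont_cont2 _ (fun u v => u) (fun u v => upd s i v)).
    apply (Ck_jcont 0). apply (Ck_pt 0). apply (Ck_px 1). auto.
    intros d Hd. exists d. split; auto. intros u v Hu Hv. split; auto. intro m. unfold upd.
    destruct (Nat.eqb m i); auto. rewrite Rminus_diag, Rabs_R0; auto.
  - apply (jcont_cont2 _ (fun u v => u) (fun u v => upd s i v)).
    apply (Ck_jcont 0). apply (Ck_px 0). apply (Ck_pt 1). auto.
    intros d Hd. exists d. split; auto. intros u v Hu Hv. split; auto. intro m. unfold upd.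
    destruct (Nat.eqb m i); auto. rewrite Rminus_diag, Rabs_R0; auto.
Qed.

Lemma schwarz_x f i j t s : Ck 2 f -> px i (px j f) t s = px j (px i f) t s.
Proof.
  intro Hf. destruct (Nat.eq_dec i j) as [->|Hij]. reflexivity.
  assert (DXf : DX f) by (eapply Ck_DX; eauto).
  assert (Di : DX (px i f)) by (apply (Ck_DX 0); apply (Ck_px 1); auto).
  assert (Dj : DX (px j f)) by (apply (Ck_DX 0); apply (Ck_px 1); auto).
  pose proof (schwarz_gen (fun u v => f t (upd (upd s j u) i v)) (fun u v => px j f t (upd (upd s j u) i v))
    (fun u v => px i f t (upd (upd s j u) i v)) (fun u v => px j (px i f) t (upd (upd s j u) i v))
    (fun u v => px i (px j f) t (upd (upd s j u) i v)) (s j) (s i)) as H.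
  cbv beta in H. rewrite !upd_id in H. symmetry. apply H; clear H.
  - intros u v. apply px_lim_gen; auto. intro z; apply upd3; auto. apply upd2j; auto.
  - intros u v. apply px_lim_gen; auto. intro z; apply upd_upd. apply upd_same.
  - intros u v. apply px_lim_gen; auto. intro z; apply upd3; auto. apply upd2j; auto.
  - intros u v. apply px_lim_gen; auto. intro z; apply upd_upd. apply upd_same.
  - apply (jcont_cont2 _ (fun u v => t) (fun u v => upd (upd s j u) i v)).
    apply (Ck_jcont 0). apply (Ck_px 0). apply (Ck_px 1). auto.
    intros d Hd. exists d. split; auto. intros u v Hu Hv. split. rewrite Rminus_diag, Rabs_R0; auto.
    intro m. unfold upd.
    destruct (Nat.eqb_spec m i); destruct (Nat.eqb_spec m j); subst; try lia; rewrite ?Nat.eqb_refl; auto.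
    all: try (rewrite Rminus_diag, Rabs_R0; auto).
    all: replace (Nat.eqb j i) with false by (symmetry; apply Nat.eqb_neq; auto); auto.
  - apply (jcont_cont2 _ (fun u v => t) (fun u v => upd (upd s j u) i v)).
    apply (Ck_jcont 0). apply (Ck_px 0). apply (Ck_px 1). auto.
    intros d Hd. exists d. split; auto. intros u v Hu Hv. split. rewrite Rminus_diag, Rabs_R0; auto.
    intro m. unfold upd.
    destruct (Nat.eqb_spec m i); destruct (Nat.eqb_spec m j); subst; try lia; rewrite ?Nat.eqb_refl; auto.
    all: try (rewrite Rminus_diag, Rabs_R0; auto).
    all: replace (Nat.eqb j i) with false by (symmetry; apply Nat.eqb_neq; auto); auto.
Qed.

Lemma lam_fun al be ga1 : lam al be ga1 =
  fmul (fadd ga1 (fadd (fmul (fpr 1) (Dt al)) (fmul (fc (-1)) (Dt be))))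
       (finv (fadd be (fmul (fc (-1)) (fmul (fpr 1) al)))).
Proof. fext. unfold lam, fmul, fadd, finv, fc, fpr. unfold Rdiv. f_equal. ring. f_equal. ring. Qed.

Lemma tgam_fun al be ga1 j : tgam al be ga1 (S (S j)) =
  fadd (fadd (Dt (tgam al be ga1 (S j))) (fmul (fc (-1)) (fmul (Dt al) (fpr (S (S j))))))
       (fmul (lam al be ga1) (fadd (tgam al be ga1 (S j)) (fmul (fc (-1)) (fmul al (fpr (S (S j))))))).
Proof. fext. unfold fmul, fadd, fc, fpr. simpl. ring. Qed.

Lemma smooth_Sm f : smooth f -> Sm f. Proof. intros [_ H]; exact H. Qed.

Section S.
Variables al be ga1 : JFun.
Hypothesis Sal : Sm al. Hypothesis Sbe : Sm be. Hypothesis Sga : Sm ga1.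
Hypothesis Dal : depends_upto 1 al. Hypothesis Dbe : depends_upto 1 be. Hypothesis Dga : depends_upto 1 ga1.
Hypothesis Hnz : forall t s, be t s - s 1%nat * al t s <> 0.

Lemma lam_Sm : Sm (lam al be ga1) /\ depends_upto 2 (lam al be ga1).
Proof.
  rewrite lam_fun. split.
  - intro n. apply Ck_mul. apply Ck_add. apply Sga. apply Ck_add. apply Ck_mul. apply Ck_pr. apply (Sm_Dt 1); auto.
    apply Ck_mul. apply Ck_c. apply (Sm_Dt 1); auto.
    apply Ck_inv. intros t s. unfold fadd, fmul, fc, fpr. replace (be t s + -1 * (s 1%nat * al t s)) with (be t s - s 1%nat * al t s) by ring. auto.
    apply Ck_add. apply Sbe. apply Ck_mul. apply Ck_c. apply Ck_mul. apply Ck_pr. apply Sal.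
  - apply dep_mul. apply dep_add. apply (dep_mono 1); auto. apply dep_add. apply dep_mul. apply dep_pr; lia. apply dep_Dt; auto.
    apply dep_mul. apply dep_c. apply dep_Dt; auto.
    apply dep_inv. apply dep_add. apply (dep_mono 1); auto. apply dep_mul. apply dep_c. apply dep_mul. apply dep_pr; lia. apply (dep_mono 1); auto.
Qed.

Lemma tgam_Sm i : Sm (tgam al be ga1 i) /\ depends_upto (S i) (tgam al be ga1 i).
Proof.
  destruct lam_Sm as [SL DL].
  induction i as [|i IH].
  - simpl. split; auto.
  - destruct i as [|i]. simpl. split; auto. apply (dep_mono 1); auto.
    destruct IH as [IH1 IH2]. rewrite tgam_fun. split.
    + intro n. apply Ck_add. apply Ck_add. apply (Sm_Dt (S (S i))); auto.
      apply Ck_mul. apply Ck_c. apply Ck_mul. apply (Sm_Dt 1); auto. apply Ck_pr.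
      apply Ck_mul. apply SL. apply Ck_add. apply IH1. apply Ck_mul. apply Ck_c. apply Ck_mul. apply Sal. apply Ck_pr.
    + apply dep_add. apply dep_add. apply dep_Dt; auto.
      apply dep_mul. apply dep_c. apply dep_mul. apply (dep_mono 2). lia. apply dep_Dt; auto. apply dep_pr; lia.
      apply dep_mul. apply (dep_mono 2); auto. lia. apply dep_add. apply (dep_mono (S (S i))); auto.
      apply dep_mul. apply dep_c. apply dep_mul. apply (dep_mono 1); auto; lia. apply dep_pr; lia.
Qed.

Lemma tgam_prolong i : tgam al be ga1 i = prolong (lam al be ga1) al be i.
Proof.
  induction i as [|i IH]. reflexivity.
  destruct i as [|i].
  - fext. simpl. unfold lam. field. auto.
  - fext. change (tgam al be ga1 (S (S i)) t s = Dt (prolong (lam al be ga1) al be (S i)) t s - Dt al t s * s (S (S i))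
      + lam al be ga1 t s * (prolong (lam al be ga1) al be (S i) t s - al t s * s (S (S i)))).
    rewrite <- IH. reflexivity.
Qed.
End S.

Lemma sum_mul_l c A n : c * sum_f_R0 A n = sum_f_R0 (fun i => c * A i) n.
Proof. rewrite scal_sum. apply sum_eq. intros; ring. Qed.
Lemma sum_mul_r c A n : sum_f_R0 A n * c = sum_f_R0 (fun i => A i * c) n.
Proof. rewrite Rmult_comm, scal_sum. reflexivity. Qed.
Lemma sum0 n : sum_f_R0 (fun _ => 0) n = 0.
Proof. induction n; simpl; auto. rewrite IHn; ring. Qed.
Lemma exch (A : nat -> nat -> R) n m :
  sum_f_R0 (fun i => sum_f_R0 (fun j => A i j) m) n = sum_f_R0 (fun j => sum_f_R0 (fun i => A i j) n) m.
Proof. induction n. reflexivity.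
  simpl. rewrite IHn. rewrite <- sum_plus. reflexivity. Qed.
Lemma delta_sum (c : nat -> R) j M :
  sum_f_R0 (fun i => if Nat.eqb i j then c i else 0) M = if Nat.leb j M then c j else 0.
Proof. induction M.
  - simpl. destruct j; simpl; auto.
  - rewrite tech5. cbv beta. rewrite IHM. destruct (Nat.leb_spec j M), (Nat.eqb_spec (S M) j), (Nat.leb_spec j (S M)); try lia; subst; try ring.
Qed.

Lemma algebra (K : nat) (x : nat -> R) (a Pa Da : R) (Xa : nat -> R) (g Pg Dg : nat -> R) (Xg : nat -> nat -> R)
  (Ft Ftt : R) (Fx Ftx Fxt : nat -> R) (Fxx : nat -> nat -> R) (lam mu : R) :
  Da = Pa + sum_f_R0 (fun i => x (S i) * Xa i) (S (S K)) ->
  (forall j, (j <= S K)%nat -> Dg j = Pg j + sum_f_R0 (fun i => x (S i) * Xg j i) (S (S K))) ->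
  (forall j, (j <= K)%nat -> g (S j) = Dg j - Da * x (S j) + lam * (g j - a * x (S j))) ->
  mu = - (Da + lam * a) ->
  (forall j, (K < j)%nat -> Fx j = 0) ->
  (forall i, Ftx i = Fxt i) ->
  (forall i j, Fxx i j = Fxx j i) ->
  (a * (Ftt + sum_f_R0 (fun i => x (S i) * Ftx i) (S (S K)))
   + sum_f_R0 (fun j => g j * (Fxt j + sum_f_R0 (fun i => (if Nat.eqb (S i) j then 1 else 0) * Fx i + x (S i) * Fxx j i) (S (S K)))) (S K))
  - ((Pa * Ft + a * Ftt + sum_f_R0 (fun j => Pg j * Fx j + g j * Ftx j) (S K))
     + sum_f_R0 (fun i => x (S i) * (Xa i * Ft + a * Fxt i + sum_f_R0 (fun j => Xg j i * Fx j + g j * Fxx i j) (S K))) (S (S K)))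
  = lam * (a * Ft + sum_f_R0 (fun j => g j * Fx j) (S K)) + mu * (Ft + sum_f_R0 (fun i => x (S i) * Fx i) (S (S K))).
Proof.
  intros HDa HDg Hrec Hmu HF HS1 HS2.
  set (M := S (S K)).
  set (W := sum_f_R0 (fun j => g j * sum_f_R0 (fun i => x (S i) * Fxx j i) M) (S K)).
  set (S1 := sum_f_R0 (fun i => x (S i) * Ftx i) M).
  set (G1 := sum_f_R0 (fun j => g j * Fxt j) (S K)).
  assert (F1 : sum_f_R0 (fun j => g j * (Fxt j + sum_f_R0 (fun i => (if Nat.eqb (S i) j then 1 else 0) * Fx i + x (S i) * Fxx j i) M)) (S K)
     = G1 + sum_f_R0 (fun j => g (S j) * Fx j) K + W).
  { transitivity (sum_f_R0 (fun j => g j * Fxt j + g j * sum_f_R0 (fun i => (if Nat.eqb (S i) j then 1 else 0) * Fx i) M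
        + g j * sum_f_R0 (fun i => x (S i) * Fxx j i) M) (S K)).
    { apply sum_eq; intros. rewrite sum_plus. ring. }
    rewrite !sum_plus. unfold G1, W. f_equal. f_equal.
    rewrite decomp_sum by lia. simpl pred.
    rewrite (sum_eq (fun i => (if Nat.eqb (S i) 0 then 1 else 0) * Fx i) (fun _ => 0)) by (intros; simpl; ring).
    rewrite sum0, Rmult_0_r, Rplus_0_l. apply sum_eq. intros j Hj. f_equal.
    rewrite (sum_eq _ (fun i => if Nat.eqb i j then Fx i else 0)).
    rewrite delta_sum. destruct (Nat.leb_spec j M). auto. unfold M in *; lia.
    intros i _. simpl. destruct (Nat.eqb i j); ring. }
  assert (F2 : sum_f_R0 (fun i => x (S i) * (Xa i * Ft + a * Fxt i + sum_f_R0 (fun j => Xg j i * Fx j + g j * Fxx i j) (S K))) M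
     = (Da - Pa) * Ft + a * S1 + sum_f_R0 (fun j => (Dg j - Pg j) * Fx j) (S K) + W).
  { transitivity (sum_f_R0 (fun i => x (S i) * Xa i * Ft + a * (x (S i) * Ftx i)
        + sum_f_R0 (fun j => x (S i) * Xg j i * Fx j) (S K) + sum_f_R0 (fun j => g j * (x (S i) * Fxx i j)) (S K)) M).
    { apply sum_eq; intros i _.
      assert (inner : x (S i) * sum_f_R0 (fun j => Xg j i * Fx j + g j * Fxx i j) (S K) =
         sum_f_R0 (fun j => x (S i) * Xg j i * Fx j) (S K) + sum_f_R0 (fun j => g j * (x (S i) * Fxx i j)) (S K)).
      { rewrite <- sum_plus, sum_mul_l. apply sum_eq; intros; ring. }
      rewrite HS1. rewrite !Rmult_plus_distr_l. rewrite inner. ring. }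
    rewrite !sum_plus. rewrite (exch _ M (S K)). rewrite (exch _ M (S K)). unfold W, S1.
    f_equal; [f_equal; [f_equal|] |].
    - rewrite HDa. unfold M. replace (Pa + sum_f_R0 (fun i => x (S i) * Xa i) (S (S K)) - Pa) with (sum_f_R0 (fun i => x (S i) * Xa i) (S (S K))) by ring.
      rewrite sum_mul_r. reflexivity.
    - rewrite sum_mul_l. reflexivity.
    - apply sum_eq; intros j Hj. rewrite HDg by auto. replace (Pg j + sum_f_R0 (fun i => x (S i) * Xg j i) (S (S K)) - Pg j)
        with (sum_f_R0 (fun i => x (S i) * Xg j i) (S (S K))) by ring. rewrite sum_mul_r. reflexivity.
    - apply sum_eq; intros j Hj. rewrite sum_mul_l. apply sum_eq; intros i _. rewrite HS2. ring. }
  fold M S1. rewrite F1, F2.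
  assert (E : sum_f_R0 (fun j => Pg j * Fx j + g j * Ftx j) (S K) + sum_f_R0 (fun j => (Dg j - Pg j) * Fx j) (S K)
     = G1 + sum_f_R0 (fun j => Dg j * Fx j) K).
  { rewrite <- sum_plus. unfold G1. rewrite <- (sum_stab (fun j => Dg j * Fx j) K (S K)).
    2: { intros; rewrite HF; auto; ring. } 2: lia.
    rewrite <- sum_plus. apply sum_eq; intros. rewrite HS1. ring. }
  rewrite (sum_stab (fun j => g j * Fx j) K (S K)). 2: { intros; rewrite HF; auto; ring. } 2: lia.
  rewrite (sum_stab (fun i => x (S i) * Fx i) K M). 2: { intros; rewrite HF; auto; ring. } 2: (unfold M; lia).
  assert (Hsum : sum_f_R0 (fun j => g (S j) * Fx j) K - sum_f_R0 (fun j => Dg j * Fx j) K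
     = lam * sum_f_R0 (fun j => g j * Fx j) K + mu * sum_f_R0 (fun i => x (S i) * Fx i) K).
  { rewrite <- minus_sum, !sum_mul_l, <- sum_plus. apply sum_eq; intros j Hj. rewrite Hrec by auto. rewrite Hmu. ring. }
  rewrite Hmu in *. lra.
Qed.

Lemma Sm_DT f : Sm f -> DT f. Proof. intro H. apply (Ck_DT 0). apply H. Qed.
Lemma Sm_DX f : Sm f -> DX f. Proof. intro H. apply (Ck_DX 0). apply H. Qed.
Lemma Sm_pt f : Sm f -> Sm (pt f). Proof. intros H n. apply Ck_pt. apply H. Qed.
Lemma Sm_px i f : Sm f -> Sm (px i f). Proof. intros H n. apply Ck_px. apply H. Qed.
Lemma Sm_c c : Sm (fc c). Proof. intro n; apply Ck_c. Qed.
Lemma Sm_pr i : Sm (fpr i). Proof. intro n; apply Ck_pr. Qed.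
Lemma Sm_mul f g : Sm f -> Sm g -> Sm (fmul f g). Proof. intros; intro n; apply Ck_mul; auto. Qed.

Lemma tau_fun K al be ga1 g t s : tau (S K) al be ga1 g t s =
  al t s * pt g t s + sum_f_R0 (fun j => tgam al be ga1 j t s * px j g t s) (S K).
Proof. unfold tau. replace (S K - 1)%nat with K by lia. rewrite (decomp_sum _ (S K)) by lia.
  simpl pred. simpl. ring. Qed.

Section Main.
Variables al be ga1 f : JFun.
Variable K : nat.
Hypothesis Sal : Sm al. Hypothesis Sbe : Sm be. Hypothesis Sga : Sm ga1.
Hypothesis Dal : depends_upto 1 al. Hypothesis Dbe : depends_upto 1 be. Hypothesis Dga : depends_upto 1 ga1.
Hypothesis Hnz : forall t s, be t s - s 1%nat * al t s <> 0.
Hypothesis Sf : Sm f. Hypothesis Df : depends_upto K f.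

Let M := S (S K).
Let TF := fadd (fmul al (pt f)) (fsum (fun j => fmul (tgam al be ga1 j) (px j f)) (S K)).

Lemma tg_Sm j : Sm (tgam al be ga1 j). Proof. apply tgam_Sm; auto. Qed.
Lemma tg_dep j : depends_upto (S j) (tgam al be ga1 j). Proof. apply tgam_Sm; auto. Qed.

Lemma pA t s : pt (Dt f) t s = pt (pt f) t s + sum_f_R0 (fun i => s (S i) * pt (px i f) t s) M.
Proof.
  rewrite (Dt_fun M f) by (apply (dep_mono K); auto; unfold M; lia).
  rewrite pt_add. rewrite pt_fsum. unfold fadd, fsum. f_equal. apply sum_eq; intros.
  rewrite pt_mul, pt_pr. unfold fadd, fmul, fc, fpr. ring.
  apply Sm_DT, Sm_pr. apply Sm_DT, Sm_px, Sf.
  intros; apply DT_mul. apply Sm_DT, Sm_pr. apply Sm_DT, Sm_px, Sf.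
  apply Sm_DT, Sm_pt, Sf.
  apply DT_fsum. intros; apply DT_mul. apply Sm_DT, Sm_pr. apply Sm_DT, Sm_px, Sf.
Qed.

Lemma pB j t s : px j (Dt f) t s = px j (pt f) t s +
   sum_f_R0 (fun i => (if Nat.eqb (S i) j then 1 else 0) * px i f t s + s (S i) * px j (px i f) t s) M.
Proof.
  rewrite (Dt_fun M f) by (apply (dep_mono K); auto; unfold M; lia).
  rewrite px_add. rewrite px_fsum. unfold fadd, fsum. f_equal. apply sum_eq; intros.
  rewrite px_mul, px_pr. unfold fadd, fmul, fc, fpr. ring.
  apply Sm_DX, Sm_pr. apply Sm_DX, Sm_px, Sf.
  intros; apply DX_mul. apply Sm_DX, Sm_pr. apply Sm_DX, Sm_px, Sf.
  apply Sm_DX, Sm_pt, Sf.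
  apply DX_fsum. intros; apply DX_mul. apply Sm_DX, Sm_pr. apply Sm_DX, Sm_px, Sf.
Qed.

Lemma TF_eq : tau (S K) al be ga1 f = TF.
Proof. fext. rewrite tau_fun. reflexivity. Qed.

Lemma TF_dep : depends_upto M TF.
Proof. unfold TF. apply dep_add. apply dep_mul. apply (dep_mono 1); auto; unfold M; lia.
  apply dep_pt. apply (dep_mono K); auto; unfold M; lia.
  apply dep_fsum. intros. apply dep_mul. apply (dep_mono (S i)). unfold M; lia. apply tg_dep.
  apply dep_px. apply (dep_mono K); auto; unfold M; lia. Qed.

Lemma pE t s : pt TF t s = pt al t s * pt f t s + al t s * pt (pt f) t s +
  sum_f_R0 (fun j => pt (tgam al be ga1 j) t s * px j f t s + tgam al be ga1 j t s * pt (px j f) t s) (S K).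
Proof.
  unfold TF. rewrite pt_add, pt_mul, pt_fsum. unfold fadd, fsum. f_equal. apply sum_eq; intros.
  rewrite pt_mul. reflexivity.
  apply Sm_DT, tg_Sm. apply Sm_DT, Sm_px, Sf.
  intros; apply DT_mul. apply Sm_DT, tg_Sm. apply Sm_DT, Sm_px, Sf.
  apply Sm_DT, Sal. apply Sm_DT, Sm_pt, Sf.
  apply DT_mul. apply Sm_DT, Sal. apply Sm_DT, Sm_pt, Sf.
  apply DT_fsum. intros; apply DT_mul. apply Sm_DT, tg_Sm. apply Sm_DT, Sm_px, Sf.
Qed.

Lemma pF i t s : px i TF t s = px i al t s * pt f t s + al t s * px i (pt f) t s +
  sum_f_R0 (fun j => px i (tgam al be ga1 j) t s * px j f t s + tgam al be ga1 j t s * px i (px j f) t s) (S K).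
Proof.
  unfold TF. rewrite px_add, px_mul, px_fsum. unfold fadd, fsum. f_equal. apply sum_eq; intros.
  rewrite px_mul. reflexivity.
  apply Sm_DX, tg_Sm. apply Sm_DX, Sm_px, Sf.
  intros; apply DX_mul. apply Sm_DX, tg_Sm. apply Sm_DX, Sm_px, Sf.
  apply Sm_DX, Sal. apply Sm_DX, Sm_pt, Sf.
  apply DX_mul. apply Sm_DX, Sal. apply Sm_DX, Sm_pt, Sf.
  apply DX_fsum. intros; apply DX_mul. apply Sm_DX, tg_Sm. apply Sm_DX, Sm_px, Sf.
Qed.

Lemma main_id t s :
  tau (S K) al be ga1 (Dt f) t s - Dt (tau (S K) al be ga1 f) t s
  = lam al be ga1 t s * tau (S K) al be ga1 f t s + mu al be ga1 t s * Dt f t s.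
Proof.
  rewrite TF_eq at 1. rewrite (Dt_form M TF t s TF_dep).
  rewrite !tau_fun. rewrite pA.
  rewrite (sum_eq (fun j => tgam al be ga1 j t s * px j (Dt f) t s)
    (fun j => tgam al be ga1 j t s * (px j (pt f) t s +
      sum_f_R0 (fun i => (if Nat.eqb (S i) j then 1 else 0) * px i f t s + s (S i) * px j (px i f) t s) M)))
    by (intros; rewrite pB; reflexivity).
  rewrite pE.
  rewrite (sum_eq (fun i => s (S i) * px i TF t s)
    (fun i => s (S i) * (px i al t s * pt f t s + al t s * px i (pt f) t s +
      sum_f_R0 (fun j => px i (tgam al be ga1 j) t s * px j f t s + tgam al be ga1 j t s * px i (px j f) t s) (S K))))
    by (intros; rewrite pF; reflexivity).
  rewrite (Dt_form M f t s) by (apply (dep_mono K); auto; unfold M; lia).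
  apply (algebra K s (al t s) (pt al t s) (Dt al t s) (fun i => px i al t s)
    (fun j => tgam al be ga1 j t s) (fun j => pt (tgam al be ga1 j) t s) (fun j => Dt (tgam al be ga1 j) t s)
    (fun j i => px i (tgam al be ga1 j) t s)
    (pt f t s) (pt (pt f) t s) (fun i => px i f t s) (fun i => pt (px i f) t s) (fun i => px i (pt f) t s)
    (fun j i => px j (px i f) t s) (lam al be ga1 t s) (mu al be ga1 t s)).
  - apply (Dt_form M al t s). apply (dep_mono 1); auto; unfold M; lia.
  - intros j Hj. apply (Dt_form M). apply (dep_mono (S j)). unfold M; lia. apply tg_dep.
  - intros j Hj. rewrite !(tgam_prolong al be ga1 Hnz). reflexivity.
  - reflexivity.
  - intros j Hj. apply (px_dep_zero K); auto.
  - intros i. apply schwarz_t. apply Sf.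
  - intros i j. apply schwarz_x. apply Sf.
Qed.
End Main.

Theorem theorem2p3 (k : nat) (al be ga1 : JFun) :
  (1 <= k)%nat ->
  smooth al -> smooth be -> smooth ga1 ->
  depends_upto 1 al -> depends_upto 1 be -> depends_upto 1 ga1 ->
  (forall t s, be t s - s 1%nat * al t s <> 0) ->
  (forall f : JFun, smooth f -> depends_upto (k - 1) f ->
     forall t s,
       tau k al be ga1 (Dt f) t s - Dt (tau k al be ga1 f) t s
       = lam al be ga1 t s * tau k al be ga1 f t s + mu al be ga1 t s * Dt f t s)
  /\ depends_upto 2 (lam al be ga1)
  /\ (forall i, (i <= k)%nat -> forall t s,
        tgam al be ga1 i t s = prolong (lam al be ga1) al be i t s).
Proof.
  intros Hk Sa Sb Sg Da Db Dg Hnz.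
  apply smooth_Sm in Sa, Sb, Sg.
  split; [|split].
  - intros f Sf Df t s. destruct k as [|K]. lia.
    replace (S K - 1)%nat with K in Df by lia.
    apply main_id; auto. apply smooth_Sm; auto.
  - apply lam_Sm; auto.
  - intros i _ t s. rewrite tgam_prolong; auto.
Qed.
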